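(* Let $a, b$ be real numbers with $1 < a \leq b$, and let $$A = \bigcup_{k=0}^{\infty} \big([b^k, a b^k) \cap \mathbb{N}\big).$$ Then $A$ is fractionally dense if and only if $b \leq a^2$. Moreover, $\underline{d}(A) = \frac{a-1}{b-1}$.
   Context: $\mathbb{N} = \{1,2,3,\ldots\}$. For $A \subseteq \mathbb{N}$, the quotient set is $R(A) = \{a/a' : a, a' \in A\}$, and $A$ is called fractionally dense if the closure of $R(A)$ in $\mathbb{R}$ equals $[0,\infty)$. For $A \subseteq \mathbb{N}$ and $x>0$ let $A(x) = A \cap [1,x]$; the lower asymptotic density of $A$ is $\underline{d}(A) = \liminf_{n\to\infty} |A(n)|/n$. *)

(* Defs.v *)
From mathcomp Require Import all_boot all_order all_algebra.
From mathcomp Require Import all_classical all_reals all_analysis.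
Unset Strict Implicit. Unset Printing Implicit Defensive.
Import Order.TTheory GRing.Theory Num.Theory numFieldNormedType.Exports.
Local Open Scope classical_set_scope.
Local Open Scope ring_scope.

(* Subsets of N = {1,2,3,...} are represented as A : set nat with 0 \notin A. *)
Definition quotient_set (R : realType) (A : set nat) : set R :=
  [set x | exists p q : nat, A p /\ A q /\ x = p%:R / q%:R].

Definition fractionally_dense (R : realType) (A : set nat) : Prop :=
  closure (quotient_set R A) = [set x : R | 0 <= x].

Definition count_upto (A : set nat) (n : nat) : nat :=
  (\sum_(1 <= k < n.+1) (asbool (A k) : nat))%N.

Definition lower_density (R : realType) (A : set nat) : \bar R :=
  limn_einf (fun n : nat => ((count_upto A n)%:R / n%:R : R)%:E).

Definition Aab (R : realType) (a b : R) : set nat :=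
  [set m : nat | (0 < m)%N /\ exists k : nat, b ^+ k <= m%:R /\ m%:R < a * b ^+ k].

(* Main.v *)
Require Import Defs.
From mathcomp Require Import all_boot all_order all_algebra.
From mathcomp Require Import all_classical all_reals all_analysis.
From mathcomp Require Import ring lra.
Import Order.TTheory GRing.Theory Num.Theory numFieldNormedType.Exports.
Local Open Scope classical_set_scope.
Local Open Scope ring_scope.


Section Basic.
Variable R : realType.
Implicit Types (x y z u : R).

Lemma floorP x : 0 <= x -> exists n : nat, n%:R <= x < n.+1%:R.
Proof. by move=> x0; exists (Num.truncn x); exact: truncn_itv. Qed.

Lemma bern (t : R) n : 0 <= t -> 1 + n%:R * t <= (1 + t) ^+ n.
Proof.
move=> t0; elim: n => [|n IH]; first by rewrite expr0 mul0r addr0.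
have e : (1 + t) ^+ n.+1 = (1 + t) ^+ n + (1 + t) ^+ n * t.
  by rewrite exprS; ring.
rewrite e -natr1.
have h0 : 0 <= n%:R * t by rewrite mulr_ge0.
have h2 : (1 + n%:R * t) * t <= (1 + t) ^+ n * t by apply: ler_wpM2r.
have h3 : 0 <= n%:R * t * t by rewrite !mulr_ge0.
lra.
Qed.

Lemma bern2 (t : R) n : 0 <= t ->
  1 + n%:R * t + n%:R * (n%:R - 1) / 2 * t ^+ 2 <= (1 + t) ^+ n.
Proof.
move=> t0; elim: n => [|n IH]; first by rewrite expr0 !mul0r !addr0.
have e : (1 + t) ^+ n.+1 = (1 + t) ^+ n + (1 + t) ^+ n * t.
  by rewrite exprS; ring.
rewrite e -natr1.
have h2 : (1 + n%:R * t) * t <= (1 + t) ^+ n * t.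
  apply: ler_wpM2r => //; exact: bern.
have e2 : 1 + (n%:R + 1) * t + (n%:R + 1) * (n%:R + 1 - 1) / 2 * t ^+ 2 =
  (1 + n%:R * t + n%:R * (n%:R - 1) / 2 * t ^+ 2) + (1 + n%:R * t) * t :> R.
  by field.
rewrite e2; lra.
Qed.

Lemma pow_unbounded (b : R) (M : R) : 1 < b -> exists n : nat, M < b ^+ n.
Proof.
move=> b1.
have [n /andP[_ hn]] := @floorP `|M / (b - 1)| (normr_ge0 _).
exists n.+1.
have t0 : 0 < b - 1 by rewrite subr_gt0.
have := @bern (b - 1) n.+1 (ltW t0).
rewrite (_ : 1 + (b - 1) = b); last by ring.
move=> h.
have hM : M / (b - 1) < n.+1%:R by apply: le_lt_trans hn; exact: ler_norm.
rewrite ltr_pdivrMr ?subr_gt0 // in hM.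
lra.
Qed.

Lemma pow_mono (b : R) i j : 1 <= b -> (i <= j)%N -> b ^+ i <= b ^+ j.
Proof.
move=> b1 /subnK <-; rewrite exprD; elim: (j - i)%N => [|k IH].
  by rewrite expr0 mul1r.
have hi : 0 <= b ^+ i by rewrite exprn_ge0 // (le_trans ler01).
rewrite exprS -mulrA; apply: le_trans IH _.
rewrite -[X in X <= _]mul1r; apply: ler_wpM2r => //.
by rewrite mulr_ge0 // exprn_ge0 // (le_trans ler01).
Qed.

Lemma pow_ge1 (b : R) i : 1 <= b -> 1 <= b ^+ i.
Proof. by move=> b1; rewrite -(expr0 b); apply: pow_mono. Qed.

Lemma quad_bound (b : R) : 1 < b -> exists c : R, 0 < c /\
  forall K : nat, (K%:R + 1) ^+ 2 <= c * b ^+ K.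
Proof.
move=> b1; set t := b - 1.
have t0 : 0 < t by rewrite subr_gt0.
exists (2 / t ^+ 2 + 3 / t + 1); split.
  by rewrite !addr_gt0 // divr_gt0 // exprn_gt0.
move=> K.
have tK : 0 <= (K%:R : R) * (K%:R - 1) / 2 * t ^+ 2.
  case: (K) => [|K'] ; first by rewrite !mul0r.
  rewrite -natr1 addrK; by rewrite !mulr_ge0 // ?invr_ge0 // ?exprn_ge0 // ltW.
have := @bern2 t K (ltW t0); rewrite (_ : 1 + t = b); last by rewrite /t; ring.
move=> hb.
set X := b ^+ K in hb *.
have hK : 0 <= (K%:R : R) by [].
have X1 : 1 <= X by rewrite /X pow_ge1 // ltW.
have e1 : 2 / t ^+ 2 * (K%:R * (K%:R - 1) / 2 * t ^+ 2) = K%:R * (K%:R - 1).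
  have tn : t != 0 by rewrite gt_eqF.
  by field.
have e2 : 3 / t * (K%:R * t) = 3 * K%:R by field; rewrite gt_eqF.
have p1 : 2 / t ^+ 2 * (K%:R * (K%:R - 1) / 2 * t ^+ 2) <= 2 / t ^+ 2 * X.
  apply: ler_wpM2l; first by rewrite divr_ge0 // exprn_ge0 // ltW.
  have : 0 <= K%:R * t by rewrite mulr_ge0 // ltW.
  lra.
have p2 : 3 / t * (K%:R * t) <= 3 / t * X.
  apply: ler_wpM2l; first by rewrite divr_ge0 // ltW.
  lra.
rewrite e1 in p1; rewrite e2 in p2.
have -> : (2 / t ^+ 2 + 3 / t + 1) * X = 2 / t ^+ 2 * X + 3 / t * X + X by ring.
have -> : (K%:R + 1) ^+ 2 = K%:R * (K%:R - 1) + 3 * K%:R + 1 :> R by ring.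
lra.
Qed.

End Basic.
Arguments pow_unbounded {R b}.
Arguments pow_mono {R b}.
Arguments pow_ge1 {R b}.
Arguments quad_bound {R b}.
Arguments floorP {R x}.


Section Frac.
Variables (R : realType) (a b : R).
Hypotheses (ha : 1 < a) (hab : a <= b).

Let b1 : 1 < b. Proof. exact: lt_le_trans hab. Qed.
Let b0 : 0 < b. Proof. exact: lt_trans ltr01 b1. Qed.
Let a0 : 0 < a. Proof. exact: lt_trans ltr01 ha. Qed.

Lemma bk_ge1 k : 1 <= b ^+ k. Proof. exact/pow_ge1/ltW. Qed.

Lemma block_mem k (p : nat) : b ^+ k <= p%:R -> p%:R < a * b ^+ k -> Aab R a b p.
Proof.
move=> h1 h2; split; last by exists k.
by rewrite -(ltr0n R); apply: lt_le_trans h1; apply: lt_le_trans (bk_ge1 k).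
Qed.

Lemma ab_le k : a * b ^+ k <= b ^+ k.+1.
Proof. by rewrite exprS ler_wpM2r // ltW // (lt_le_trans ltr01 (bk_ge1 k)). Qed.

Lemma quot_gap (p q : nat) : Aab R a b p -> Aab R a b q ->
  p%:R / q%:R < a \/ b / a < p%:R / q%:R.
Proof.
move=> [p0 [k [pk1 pk2]]] [q0 [l [ql1 ql2]]].
have qpos : 0 < (q%:R : R) by rewrite ltr0n.
case: (leqP k l) => kl.
  left; rewrite ltr_pdivrMr //.
  apply: lt_le_trans pk2 _; apply: ler_wpM2l; first exact: ltW.
  exact: le_trans (@pow_mono _ b _ _ (ltW b1) kl) ql1.
right; rewrite ltr_pdivrMr // mulrAC ltr_pdivlMr //.
have h1 : b ^+ l.+1 <= p%:R := le_trans (@pow_mono _ b _ _ (ltW b1) kl) pk1.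
have h2 : b * q%:R < b * (a * b ^+ l) by rewrite ltr_pM2l.
rewrite exprS in h1.
have : b * (a * b ^+ l) = a * (b * b ^+ l) by ring.
move=> e; rewrite e in h2.
have : a * (b * b ^+ l) <= a * p%:R by rewrite ler_pM2l.
move=> h3.
lra.
Qed.

Lemma int_near u z : 0 < u -> 1 <= (a - 1) * u -> u <= z -> z <= a * u ->
  exists p : nat, [/\ u <= p%:R, p%:R < a * u & `|p%:R - z| <= 1].
Proof.
move=> u0 hu uz za.
have z0 : 0 <= z by apply: le_trans uz; exact: ltW.
have [f /andP[f1 f2]] := @floorP R z z0.
rewrite -natr1 in f2.
have hau : u + 1 <= a * u by lra.
case: (leP u f%:R) => uf.
  case: (ltP f%:R (a * u)) => fa.
    by exists f; split => //; rewrite ler_norml; lra.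
  case: f f1 f2 uf fa => [|f] f1 f2 uf fa.
    by exfalso; lra.
  rewrite -natr1 in f1 f2 uf fa.
  exists f; split; [lra|lra|rewrite ler_norml; lra].
exists f.+1; rewrite -natr1; split; [lra|lra|rewrite ler_norml; lra].
Qed.

End Frac.
Arguments bk_ge1 {R a b}.
Arguments block_mem {R a b}.
Arguments ab_le {R a b}.
Arguments quot_gap {R a b}.
Arguments int_near {R a u z}.


Section Approx.
Variables (R : realType) (a b : R).
Hypotheses (ha : 1 < a) (hab : a <= b).

Let b1 : 1 < b. Proof. exact: lt_le_trans hab. Qed.
Let b0 : 0 < b. Proof. exact: lt_trans ltr01 b1. Qed.
Let a0 : 0 < a. Proof. exact: lt_trans ltr01 ha. Qed.

Lemma exists_exp (y : R) : 1 <= y -> exists j : nat, b ^+ j <= y /\ y < b ^+ j.+1.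
Proof.
move=> y1; have [N hN] := pow_unbounded y b1.
elim: N hN => [|N IH] hN; first by rewrite expr0 in hN; exfalso; lra.
case: (ltP y (b ^+ N)) => h; first exact: IH.
by exists N.
Qed.

Lemma coverE (y : R) : b <= a ^+ 2 -> 1 <= y ->
  exists j : nat, b ^+ j <= a * y /\ y <= a * b ^+ j.
Proof.
move=> hb2 y1; have [j [h1 h2]] := @exists_exp y y1.
have bj1 := bk_ge1 ha hab j.
case: (leP y (a * b ^+ j)) => h.
  exists j; split => //.
  have : y <= a * y by apply: ler_peMl; [ lra | exact: ltW ].
  lra.
exists j.+1; split.
  rewrite exprS.
  have : b * b ^+ j <= a ^+ 2 * b ^+ j by rewrite ler_wpM2r // ltW //; lra.
  have : a ^+ 2 * b ^+ j = a * (a * b ^+ j) by ring.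
  have : a * (a * b ^+ j) <= a * y by rewrite ler_pM2l // ltW.
  lra.
have hj := bk_ge1 ha hab j.+1.
have : b ^+ j.+1 <= a * b ^+ j.+1 by apply: ler_peMl; [ lra | exact: ltW ].
lra.
Qed.

Lemma approxQ (x e : R) : b <= a ^+ 2 -> 0 < x -> 0 < e ->
  exists p q : nat, [/\ Aab R a b p, Aab R a b q & `|x - p%:R / q%:R| < e].
Proof.
move=> hb2 x0 e0.
have [m hm] := pow_unbounded x^-1 b1.
set y := x * b ^+ m.
have y1 : 1 <= y.
  rewrite -div1r ltr_pdivrMr // in hm.
  by rewrite /y mulrC ltW.
have [j [hj1 hj2]] := @coverE y hb2 y1.
have a1 : 0 < a - 1 by rewrite subr_gt0.
have [L hL] := pow_unbounded ((a - 1)^-1 + (1 + x) / e) b1.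
set w := b ^+ L in hL.
have w1 : 1 <= w by exact: (bk_ge1 ha hab).
have hw1 : (a - 1)^-1 < w.
  apply: le_lt_trans hL; rewrite lerDl divr_ge0 // ?ltW //; lra.
have hw2 : (1 + x) / e < w.
  apply: le_lt_trans hL; rewrite lerDr invr_ge0 ltW //.
have aw : 1 <= (a - 1) * w.
  by rewrite -ler_pdivrMl // mulr1 ltW.
have ew : 1 + x < e * w by rewrite mulrC -ltr_pdivrMr.
set u := b ^+ (j + L); set v := b ^+ (m + L).
have eu : u = b ^+ j * w by rewrite /u exprD.
have ev : v = b ^+ m * w by rewrite /v exprD.
have bj1 := bk_ge1 ha hab j; have bm1 := bk_ge1 ha hab m.
have u0 : 0 < u by rewrite /u (lt_le_trans ltr01) // (bk_ge1 ha hab).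
have v0 : 0 < v by rewrite /v (lt_le_trans ltr01) // (bk_ge1 ha hab).
have hu : 1 <= (a - 1) * u.
  rewrite eu; apply: le_trans (aw) _.
  have : 0 <= (a - 1) * w := le_trans ler01 aw.
  move=> h; have -> : (a - 1) * (b ^+ j * w) = b ^+ j * ((a - 1) * w) by ring.
  by apply: ler_peMl.
have hv : 1 <= (a - 1) * v.
  rewrite ev; apply: le_trans (aw) _.
  have : 0 <= (a - 1) * w := le_trans ler01 aw.
  move=> h; have -> : (a - 1) * (b ^+ m * w) = b ^+ m * ((a - 1) * w) by ring.
  by apply: ler_peMl.
have vw : w <= v by rewrite ev; apply: ler_peMl; [ lra | exact: bm1 ].
have exv : x * v = y * w by rewrite ev /y; ring.
have w0 : 0 < w by lra.
have hyw1 : b ^+ j * w <= a * y * w by rewrite ler_pM2r.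
have hyw2 : y * w <= a * b ^+ j * w by rewrite ler_pM2r.
have [Q [Q1 Q2 Q3 Q4]] : exists Q, [/\ v <= Q, Q <= a * v, u <= x * Q & x * Q <= a * u].
  case: (leP u (x * v)) => h.
    exists v; split => //; first by apply: ler_peMl; [ lra | exact: ltW ].
    by rewrite exv eu mulrA.
  exists (u / x); split.
  - by rewrite ler_pdivlMr // mulrC ltW.
  - rewrite ler_pdivrMr // eu.
    have -> : a * v * x = a * y * w by rewrite -mulrA [v * x]mulrC exv; ring.
    exact: hyw1.
  - by rewrite mulrC divfK // gt_eqF.
  - by rewrite mulrC divfK ?gt_eqF //; apply: ler_peMl; [ lra | exact: ltW ].
have [p [p1 p2 p3]] := int_near u0 hu Q3 Q4.
have [q [q1 q2 q3]] := int_near v0 hv Q1 Q2.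
exists p, q; split.
- exact: (block_mem ha hab (j + L)%N p).
- exact: (block_mem ha hab (m + L)%N q).
have q0 : 0 < (q%:R : R) by lra.
have -> : x - p%:R / q%:R = (x * q%:R - p%:R) / q%:R by field; rewrite gt_eqF.
rewrite normrM [`|_^-1|]gtr0_norm ?invr_gt0 // ltr_pdivrMr //.
have hb : `|x * q%:R - p%:R| <= x + 1.
  move: p3 q3; rewrite !ler_norml => /andP[p3 p4] /andP[q3 q4].
  have : x * (q%:R - Q) <= x * 1 by rewrite ler_pM2l.
  have : x * (-1) <= x * (q%:R - Q) by rewrite ler_pM2l.
  move=> h1 h2; apply/andP; split; lra.
apply: le_lt_trans hb _.
have : e * w <= e * q%:R by rewrite ler_pM2l //; lra.
lra.
Qed.

End Approx.

Arguments approxQ {R a b}.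


Section FD.
Variables (R : realType) (a b : R).
Hypotheses (ha : 1 < a) (hab : a <= b).

Let b1 : 1 < b. Proof. exact: lt_le_trans hab. Qed.
Let b0 : 0 < b. Proof. exact: lt_trans ltr01 b1. Qed.
Let a0 : 0 < a. Proof. exact: lt_trans ltr01 ha. Qed.

Lemma ballRE (x e y : R) : ball x e y = (`|x - y| < e).
Proof. by rewrite -ball_normE. Qed.

Lemma frac_iff : fractionally_dense R (Aab R a b) <-> b <= a ^+ 2.
Proof.
have a0' : 0 < a := a0.
split.
- move=> fd; rewrite leNgt; apply/negP => hlt.
  have [c cE] : exists c, c = b / a by eexists.
  have ac : a < c by rewrite cE ltr_pdivlMr // -expr2.
  have [x xE] : exists x, x = (a + c) / 2 by eexists.
  have cx : closure (quotient_set R (Aab R a b)) x by rewrite fd /= xE; lra.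
  have ep : 0 < (c - a) / 2 by lra.
  have [r [[p [q [Ap [Aq rE]]]] hr]] := cx _ (nbhsx_ballx x _ ep).
  rewrite ballRE ltr_norml in hr.
  have := quot_gap ha hab p q Ap Aq; rewrite -rE -cE.
  case/andP: hr => h1 h2 [] h; lra.
- move=> hb2; apply/seteqP; split => x /=.
  + move=> cx; rewrite leNgt; apply/negP => x0.
    have ep : 0 < - x by lra.
    have [r [[p [q [Ap [Aq rE]]]] hr]] := cx _ (nbhsx_ballx x _ ep).
    rewrite ballRE ltr_norml in hr.
    have : 0 <= r by rewrite rE divr_ge0.
    case/andP: hr => h1 h2; lra.
  + move=> x0 B /nbhs_ballP [e /= e0 hB].
    have [xp|x00] : 0 < x \/ x = 0.
      by case: (ltrgt0P x) => h; [left|exfalso; lra|right].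
    * have [p [q [Ap Aq hpq]]] := approxQ ha hab x e hb2 xp e0.
      exists (p%:R / q%:R); split; first by exists p, q.
      by apply: hB; rewrite ballRE.
    * have e2 : 0 < e / 2 by lra.
      have [p [q [Ap Aq hpq]]] := approxQ ha hab (e / 2) (e / 2) hb2 e2 e2.
      exists (p%:R / q%:R); split; first by exists p, q.
      apply: hB; rewrite ballRE x00 sub0r normrN.
      have : 0 <= p%:R / q%:R :> R by rewrite divr_ge0.
      rewrite ltr_norml in hpq; case/andP: hpq => h1 h2 h3.
      rewrite ger0_norm //; lra.
Qed.

End FD.


Section Count.
Variable R : realType.

Definition Sc (n : nat) (P : nat -> bool) : R := \sum_(1 <= m < n.+1) (P m : nat)%:R.

Lemma Sc0 P : Sc 0 P = 0.
Proof. by rewrite /Sc big_geq. Qed.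

Lemma Sc_rec n P : Sc n.+1 P = Sc n P + (P n.+1 : nat)%:R.
Proof. by rewrite /Sc big_nat_recr. Qed.

Lemma Sc_le n P : Sc n P <= n%:R.
Proof.
elim: n => [|n IH]; first by rewrite Sc0.
rewrite Sc_rec -natr1; apply: lerD => //; by case: (P n.+1).
Qed.

Lemma Sc_ge0 n P : 0 <= Sc n P.
Proof. by rewrite /Sc sumr_ge0. Qed.

Lemma Sc_split n (P Q1 Q2 : nat -> bool) : (forall m, (0 < m)%N -> P m = Q1 m || Q2 m) ->
  (forall m, (0 < m)%N -> ~~ (Q1 m && Q2 m)) -> Sc n P = Sc n Q1 + Sc n Q2.
Proof.
move=> hP hD; rewrite /Sc -big_split; apply: eq_big_nat => m /andP[m1 _].
have := hD m m1; rewrite hP //.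
by case: (Q1 m); case: (Q2 m) => //= _; rewrite ?addr0 ?add0r.
Qed.

Lemma Sc_mono n (P Q : nat -> bool) : (forall m, (0 < m)%N -> P m -> Q m) -> Sc n P <= Sc n Q.
Proof.
move=> hPQ; rewrite /Sc big_nat_cond [X in _ <= X]big_nat_cond.
apply: ler_sum => m /andP[/andP[m1 _] _].
have := hPQ m m1; case: (P m); case: (Q m) => //= h.
by have := h isT.
Qed.

Lemma Sc_eq n (P Q : nat -> bool) : (forall m, (0 < m)%N -> (m <= n)%N -> P m = Q m) -> Sc n P = Sc n Q.
Proof.
move=> h; rewrite /Sc; apply: eq_big_nat => m /andP[m1 m2].
by rewrite h.
Qed.

Lemma g_upper n (y : R) : 0 < y -> Sc n (fun m => m%:R < y) < y.
Proof.
move=> y0; elim: n => [|n IH]; first by rewrite Sc0.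
rewrite Sc_rec; case: (ltP (n.+1)%:R y) => h /=.
  have := Sc_le n (fun m => m%:R < y); rewrite -natr1 in h; lra.
by rewrite addr0.
Qed.

Lemma g_lower n (y : R) :
  n%:R <= Sc n (fun m => m%:R < y) \/ y - 1 <= Sc n (fun m => m%:R < y).
Proof.
elim: n => [|n IH]; first by left; rewrite Sc0.
rewrite Sc_rec; case: (ltP (n.+1)%:R y) => h /=; rewrite -natr1 in h *.
  by case: IH => IH; [left|right]; lra.
by right; case: IH => IH; lra.
Qed.

Lemma Sc_int_split n (x y : R) : x <= y ->
  Sc n (fun m => m%:R < y) =
  Sc n (fun m => (x <= m%:R) && (m%:R < y)) + Sc n (fun m => m%:R < x).
Proof.
move=> xy; apply: Sc_split => m _.
  case: (leP x m%:R) => h /=; first by rewrite orbF.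
  by rewrite (lt_le_trans h xy) ?orbT.
by case: (leP x m%:R) => h //=; rewrite andbF.
Qed.

Lemma int_lower n (x y : R) : 0 < x -> x <= y ->
  n%:R - x <= Sc n (fun m => (x <= m%:R) && (m%:R < y)) \/
  y - x - 1 <= Sc n (fun m => (x <= m%:R) && (m%:R < y)).
Proof.
move=> x0 xy; have := @Sc_int_split n x y xy; have := @g_upper n x x0.
case: (@g_lower n y) => h1 h2 h3; [left|right]; lra.
Qed.

Lemma int_upper n (x y : R) : 0 < x -> x <= y -> x <= n%:R + 1 ->
  Sc n (fun m => (x <= m%:R) && (m%:R < y)) < y - x + 1.
Proof.
move=> x0 xy xn; have := @Sc_int_split n x y xy; have := @g_upper n y (lt_le_trans x0 xy).
case: (@g_lower n x) => h1 h2 h3; lra.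
Qed.

End Count.


Section Dens.
Variables (R : realType) (a b : R).
Hypotheses (ha : 1 < a) (hab : a <= b).

Lemma b1D : 1 < b. Proof. exact: lt_le_trans hab. Qed.

Definition Tc n K := Sc R n (fun m => `[< Aab R a b m >] && (m%:R < b ^+ K)).
Definition Bc n K := Sc R n (fun m => (b ^+ K <= m%:R) && (m%:R < a * b ^+ K)).
Definition Lc := (a - 1) / (b - 1).

Lemma Lc_eq : Lc * (b - 1) = a - 1.
Proof. rewrite /Lc divfK // gt_eqF // subr_gt0; exact: b1D. Qed.

Lemma Lc_ge0 : 0 <= Lc.
Proof. rewrite /Lc divr_ge0 // subr_ge0 ltW //; exact: (lt_le_trans ha). Qed.

Lemma Lc_le1 : Lc <= 1.
Proof.
rewrite /Lc ler_pdivrMr ?mul1r ?subr_gt0; last exact: b1D.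
by rewrite lerD2r.
Qed.

Lemma nat_ge1 (m : nat) : (0 < m)%N -> (1 : R) <= m%:R.
Proof. by move=> m0; rewrite ler1n. Qed.

Lemma Tc0 n : Tc n 0 = 0.
Proof.
rewrite /Tc (@Sc_eq R n _ (fun _ => false)); last first.
  move=> m m0 _; rewrite expr0 ltNge nat_ge1 //; by rewrite andbF.
rewrite /Sc big1 //.
Qed.

Lemma Tc_step n K : Tc n K.+1 = Tc n K + Bc n K.
Proof.
have hb1 := b1D.
have bKK : b ^+ K <= b ^+ K.+1 by apply: pow_mono => //; exact: ltW.
apply: Sc_split => m m0.
  case: (ltP m%:R (b ^+ K)) => h.
    by rewrite (lt_le_trans h bKK) andbT orbF.
  rewrite andbF /=.
  apply/idP/idP.
    case/andP => /asboolP [_ [k [k1 k2]]] hm.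
    case: (ltngtP k K) => hk.
    - have : b ^+ k.+1 <= b ^+ K by apply: pow_mono => //; exact: ltW.
      have := ab_le ha hab k; lra.
    - have : b ^+ K.+1 <= b ^+ k by apply: pow_mono => //; exact: ltW.
      lra.
    - by rewrite -hk.
  move=> hm; apply/andP; split.
    by apply/asboolP; exact: (block_mem ha hab K m h hm).
  by apply: lt_le_trans hm _; exact: ab_le.
by case: (ltP m%:R (b ^+ K)) => h; rewrite ?andbF.
Qed.

Lemma Bc_bounds n K : a * b ^+ K <= n%:R + 1 ->
  (a - 1) * b ^+ K - 1 <= Bc n K /\ Bc n K < (a - 1) * b ^+ K + 1.
Proof.
move=> hn; have bK := bk_ge1 ha hab K.
have x0 : 0 < b ^+ K by lra.
have xy : b ^+ K <= a * b ^+ K by apply: ler_peMl; [lra | exact: ltW].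
split.
  have := @int_lower R n (b ^+ K) (a * b ^+ K) x0 xy.
  rewrite /Bc; case => h; lra.
have := @int_upper R n (b ^+ K) (a * b ^+ K) x0 xy.
rewrite /Bc => h; have := h (le_trans xy hn); lra.
Qed.

Lemma Lc_step K : Lc * (b ^+ K.+1 - 1) = Lc * (b ^+ K - 1) + (a - 1) * b ^+ K.
Proof.
rewrite -Lc_eq exprS; ring.
Qed.

Lemma Tc_bounds n K : b ^+ K <= n%:R + 1 ->
  Lc * (b ^+ K - 1) - K%:R <= Tc n K /\ Tc n K <= Lc * (b ^+ K - 1) + K%:R.
Proof.
elim: K => [|K IH] hK.
  by rewrite Tc0 expr0 subrr mulr0 sub0r add0r oppr0; split.
have hb1 := b1D.
have bKK : b ^+ K <= b ^+ K.+1 by apply: pow_mono => //; exact: ltW.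
have [IH1 IH2] := IH (le_trans bKK hK).
have [B1 B2] := @Bc_bounds n K (le_trans (ab_le ha hab K) hK).
rewrite Tc_step Lc_step -natr1; split; lra.
Qed.

Lemma count_Sc n : (count_upto (Aab R a b) n)%:R = Sc R n (fun m => `[< Aab R a b m >]).
Proof. by rewrite /count_upto natr_sum. Qed.

Lemma count_ge n K : Tc n K <= (count_upto (Aab R a b) n)%:R.
Proof. by rewrite count_Sc; apply: Sc_mono => m _ /andP[]. Qed.

Lemma count_eqT n K : n%:R < b ^+ K -> (count_upto (Aab R a b) n)%:R = Tc n K.
Proof.
move=> hn; rewrite count_Sc; apply: Sc_eq => m _ mn.
have : m%:R < b ^+ K by apply: le_lt_trans hn; rewrite ler_nat.
by move=> ->; rewrite andbT.
Qed.

Lemma count_lower n : exists K : nat, b ^+ K <= n%:R + 1 /\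
  Lc * n%:R - K%:R - 1 <= (count_upto (Aab R a b) n)%:R.
Proof.
have y1 : (1 : R) <= n%:R + 1 by rewrite lerDr.
have [K [hK1 hK2]] := @exists_exp R a b ha hab _ y1.
exists K; split => //.
have hc := count_ge n K.+1.
rewrite Tc_step in hc.
have [T1 _] := @Tc_bounds n K hK1.
have bK := bk_ge1 ha hab K.
have x0 : 0 < b ^+ K by lra.
have xy : b ^+ K <= a * b ^+ K by apply: ler_peMl; [lra | exact: ltW].
have L0 := Lc_ge0; have L1 := Lc_le1.
have hs := Lc_step K.
have h3 : Lc * (n%:R + 1) <= Lc * b ^+ K.+1 by apply: ler_wpM2l => //; exact: ltW.
have h4 : (1 - Lc) * b ^+ K <= (1 - Lc) * (n%:R + 1) by apply: ler_wpM2l => //; lra.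
case: (@int_lower R n (b ^+ K) (a * b ^+ K) x0 xy) => hB; rewrite -/(Bc n K) in hB; lra.
Qed.

Lemma count_upper n K : n%:R < b ^+ K -> b ^+ K <= n%:R + 1 ->
  (count_upto (Aab R a b) n)%:R <= Lc * n%:R + K%:R.
Proof.
move=> h1 h2; rewrite (@count_eqT n K h1).
have [_ T2] := @Tc_bounds n K h2.
have L0 := Lc_ge0.
have : Lc * (b ^+ K - 1) <= Lc * n%:R by apply: ler_wpM2l => //; lra.
lra.
Qed.

End Dens.
Arguments Lc {R}.
Arguments b1D {R a b}.
Arguments count_lower {R a b}.
Arguments count_upper {R a b} ha hab {n K}.
Arguments Lc_le1 {R a b}.
Arguments Lc_ge0 {R a b}.


Section Lim.
Variables (R : realType) (a b : R).
Hypotheses (ha : 1 < a) (hab : a <= b).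

Lemma ceil_pred (y : R) : 1 <= y -> exists n : nat, n%:R < y /\ y <= n%:R + 1.
Proof.
move=> y1; have [f /andP[f1 f2]] := @floorP R y (le_trans ler01 y1).
rewrite -natr1 in f2.
case: (ltP f%:R y) => h.
  by exists f; split => //; exact: ltW.
have fy : f%:R = y by apply/eqP; rewrite eq_le f1 h.
case: f f1 f2 h fy => [|f] f1 f2 h fy; first by exfalso; lra.
exists f; rewrite -natr1 in fy; split; lra.
Qed.

Lemma Kbound (c d n Kr X : R) : 0 < d -> 0 <= c -> 1 <= n -> 2 * c < d ^+ 2 * n ->
  Kr ^+ 2 <= c * X -> X <= n + 1 -> 0 <= Kr -> Kr <= d * n.
Proof.
move=> d0 c0 n1 hc hK hX Kr0.
rewrite leNgt; apply/negP => hlt.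
have dn0 : 0 <= d * n by rewrite mulr_ge0 //; lra.
have h1 : (d * n) ^+ 2 < Kr ^+ 2.
  by rewrite !expr2; apply: ltr_pM.
have h2 : c * X <= c * (n + 1) by rewrite ler_wpM2l.
have h3 : c * (n + 1) <= 2 * c * n by nra.
have h4 : 2 * c * n < d ^+ 2 * n * n by rewrite ltr_pM2r //; lra.
have : (d * n) ^+ 2 = d ^+ 2 * n * n by ring.
lra.
Qed.

Let b1 := b1D ha hab.

Lemma dens_lower d : 0 < d -> exists N : nat, forall n : nat, (N <= n)%N ->
  Lc a b - d <= (count_upto (Aab R a b) n)%:R / n%:R.
Proof.
move=> d0; have [c [c0 hc]] := quad_bound b1.
have c2 : 0 <= 2 * c / d ^+ 2 by rewrite divr_ge0 // ?exprn_ge0 // ?ltW // mulr_gt0.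
have [N0 /andP[_ hN0]] := @floorP R (2 * c / d ^+ 2) c2.
exists N0.+1 => n hn.
have n0 : (0 < n)%N by apply: leq_trans hn.
have n1 : (1 : R) <= n%:R by rewrite ler1n.
have hnN : N0.+1%:R <= (n%:R : R) by rewrite ler_nat.
have hd : 2 * c < d ^+ 2 * n%:R.
  rewrite ltr_pdivrMr ?exprn_gt0 // in hN0.
  have : N0.+1%:R * d ^+ 2 <= n%:R * d ^+ 2 by rewrite ler_wpM2r // exprn_ge0 // ltW.
  lra.
have [K [hK1 hK2]] := count_lower ha hab n.
have Kb : K%:R + 1 <= d * n%:R.
  apply: (@Kbound c d n%:R (K%:R + 1) (b ^+ K)) => //; first exact: ltW.

rewrite ler_pdivlMr ?ltr0n //.
have : Lc a b * n%:R - d * n%:R <= Lc a b * n%:R - K%:R - 1 by lra.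
move=> h; have -> : (Lc a b - d) * n%:R = Lc a b * n%:R - d * n%:R by ring.
exact: (le_trans h hK2).
Qed.

Lemma dens_upper d (N : nat) : 0 < d -> exists n : nat, (N <= n)%N /\
  (count_upto (Aab R a b) n)%:R / n%:R <= Lc a b + d.
Proof.
move=> d0; have [c [c0 hc]] := quad_bound b1.
have [K hK] := pow_unbounded (2 * c / d ^+ 2 + N%:R + 2) b1.
have c2 : 0 <= 2 * c / d ^+ 2 by rewrite divr_ge0 // ?exprn_ge0 // ?ltW // mulr_gt0.
have N0 : (0 : R) <= N%:R by [].
have y1 : (1 : R) <= b ^+ K by lra.
have [n [hn1 hn2]] := @ceil_pred _ y1.
exists n.
have nN : (N%:R : R) < n%:R by lra.
have n1 : (1 : R) <= n%:R by lra.
split; first by apply: ltnW; rewrite -(ltr_nat R).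
have hd : 2 * c < d ^+ 2 * n%:R.
  have h : 2 * c / d ^+ 2 < n%:R by lra.
  rewrite ltr_pdivrMr ?exprn_gt0 // in h.
  by rewrite [d ^+ 2 * _]mulrC.
have Kb : K%:R + 1 <= d * n%:R.
  apply: (@Kbound c d n%:R (K%:R + 1) (b ^+ K)) => //; first exact: ltW.

have hc2 := count_upper ha hab hn1 hn2.
rewrite ler_pdivrMr; last by lra.
have : Lc a b * n%:R + K%:R <= Lc a b * n%:R + d * n%:R by lra.
move=> h; have -> : (Lc a b + d) * n%:R = Lc a b * n%:R + d * n%:R by ring.
exact: (le_trans hc2 h).
Qed.

End Lim.
Arguments dens_lower {R a b}.
Arguments dens_upper {R a b}.


Lemma lower_density_eq (R : realType) (a b : R) (ha : 1 < a) (hab : a <= b) :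
  lower_density R (Aab R a b) = (Lc a b)%:E.
Proof.
rewrite /lower_density limn_einf_lim.
set u := (fun n : nat => _).
rewrite (cvg_lim _ (@cvg_einfs_sup R u)) //.
apply/eqP; rewrite eq_le; apply/andP; split.
- apply: ge_ereal_sup => _ [N _ <-].
  apply/lee_addgt0Pr => d d0.
  have [n [hn hu]] := dens_upper ha hab d N d0.
  apply: ge_ereal_inf; exists (u n); first by exists n.
  by rewrite /u -EFinD lee_fin.
- apply/lee_subgt0Pr => d d0.
  have [N hN] := dens_lower ha hab d d0.
  apply: le_ereal_sup_tmp; exists (einfs u N); first by exists N.
  apply: le_ereal_inf_tmp => _ [k hk <-].
  by rewrite /u -EFinB lee_fin; exact: hN.
Qed.

Theorem proposition1 (R : realType) (a b : R) (ha : 1 < a) (hab : a <= b) :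
  (fractionally_dense R (Aab R a b) <-> b <= a ^+ 2) /\
  lower_density R (Aab R a b) = ((a - 1) / (b - 1))%:E.
Proof.
split; first exact: frac_iff.
exact: lower_density_eq.
Qed.
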